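(* The Mixing method $M_\theta$ with a step size $\theta\in\left(0,\frac{1}{\max_i\|c_i\|_1}\right)$ never degenerates. That is, there is a constant $\delta\in(0,1)$ such that $\|\theta Vc_i\|\le1-\delta<1$ and $\|v_i-\theta Vc_i\|\ge\delta>0$.
   Context: Let $C\in\mathbb{R}^{n\times n}$ be symmetric with columns $c_i$ and $c_{ii}=0$; $V\in\mathbb{R}^{k\times n}$ has unit-norm columns $v_i$ ($\|\cdot\|$ the Euclidean norm, $\|\cdot\|_1$ the $1$-norm). The Mixing method with step size $\theta$, $M_\theta$, cyclically for $i=1,\ldots,n$ sets $v_i:=(v_i-\theta\sum_j c_{ij}v_j)/\|v_i-\theta\sum_j c_{ij}v_j\|$ using the most recent values of the $v_j$; the statement applies to every such (feasible) $V$ encountered. *)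

(* Defs.v *)
From HB Require Import structures.
From mathcomp Require Import all_boot all_order all_algebra.
Set Implicit Arguments. Unset Strict Implicit. Unset Printing Implicit Defensive.
Import Order.TTheory GRing.Theory Num.Theory.
Local Open Scope ring_scope.

Definition enorm (R : rcfType) (k : nat) (x : 'cV[R]_k) : R :=
  Num.sqrt (\sum_(i < k) x i 0 ^+ 2).

Definition norm1 (R : rcfType) (k : nat) (x : 'cV[R]_k) : R :=
  \sum_(i < k) `|x i 0|.

(* max_i ||c_i||_1 over the columns c_i of C (0 if n = 0). *)
Definition max_col_norm1 (R : rcfType) (n : nat) (C : 'M[R]_n) : R :=
  \big[Num.max/0]_(i < n) norm1 (col i C).

Definition unit_columns (R : rcfType) (k n : nat) (V : 'M[R]_(k, n)) : Prop :=
  forall j : 'I_n, enorm (col j V) = 1.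

(* Main.v *)
Require Import Defs.
Set Implicit Arguments. Unset Strict Implicit.
From HB Require Import structures.
From mathcomp Require Import all_boot all_order all_algebra.
From mathcomp Require Import ring lra.
Import Order.TTheory GRing.Theory Num.Theory.
Local Open Scope ring_scope.

Section Aux.
Variable R : rcfType.
Implicit Types k : nat.

Lemma lagrange (k : nat) (x y : 'I_k -> R) :
  \sum_i \sum_j (x i * y j - x j * y i) ^+ 2 =
  2 * ((\sum_i x i ^+ 2) * (\sum_i y i ^+ 2) - (\sum_i x i * y i) ^+ 2).
Proof.
have -> : \sum_i \sum_j (x i * y j - x j * y i) ^+ 2 =
  \sum_i \sum_j (x i ^+ 2 * y j ^+ 2) + \sum_i \sum_j (x j ^+ 2 * y i ^+ 2)
  - 2 * \sum_i \sum_j (x i * y i * (x j * y j)).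
  rewrite -big_split /= mulr_sumr -sumrN -big_split /=.
  apply: eq_bigr => i _; rewrite -big_split /= mulr_sumr -sumrN -big_split /=.
  by apply: eq_bigr => j _; ring.
rewrite (exchange_big _ _ _ _ _ (fun i j => x j ^+ 2 * y i ^+ 2)) /=.
have E1 : \sum_i \sum_j (x i ^+ 2 * y j ^+ 2) = (\sum_i x i ^+ 2) * (\sum_i y i ^+ 2).
  by rewrite mulr_suml; apply: eq_bigr => i _; rewrite mulr_sumr.
have E2 : \sum_i \sum_j (x i * y i * (x j * y j)) = (\sum_i x i * y i) ^+ 2.
  by rewrite expr2 mulr_suml; apply: eq_bigr => i _; rewrite mulr_sumr.
rewrite E1 E2; ring.
Qed.

Lemma cauchy (k : nat) (x y : 'I_k -> R) :
  (\sum_i x i * y i) ^+ 2 <= (\sum_i x i ^+ 2) * (\sum_i y i ^+ 2).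
Proof.
have H : 0 <= \sum_i \sum_j (x i * y j - x j * y i) ^+ 2.
  by apply: sumr_ge0 => i _; apply: sumr_ge0 => j _; apply: sqr_ge0.
rewrite lagrange in H; rewrite -subr_ge0; lra.
Qed.

Lemma enorm_ge0 k (x : 'cV[R]_k) : 0 <= enorm x.
Proof. exact: sqrtr_ge0. Qed.

Lemma sumsq_ge0 k (x : 'cV[R]_k) : 0 <= \sum_(i < k) x i 0 ^+ 2.
Proof. by apply: sumr_ge0 => i _; apply: sqr_ge0. Qed.

Lemma enorm_add k (x y : 'cV[R]_k) : enorm (x + y) <= enorm x + enorm y.
Proof.
rewrite -(ler_pXn2r (n:=2)) //; last first.
- by rewrite nnegrE addr_ge0 // enorm_ge0.
- by rewrite nnegrE enorm_ge0.
rewrite /enorm sqr_sqrtr ?sumsq_ge0 // sqrrD !sqr_sqrtr ?sumsq_ge0 //.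
have -> : \sum_(i < k) (x + y) i 0 ^+ 2 =
   \sum_(i < k) x i 0 ^+ 2 + (\sum_(i < k) x i 0 * y i 0) *+ 2 + \sum_(i < k) y i 0 ^+ 2.
  rewrite -sumrMnl -!big_split /=; apply: eq_bigr => i _; rewrite !mxE; ring.
rewrite lerD2r lerD2l lerMn2r /=.
rewrite -sqrtrM ?sumsq_ge0 //.
apply: (le_trans (ler_norm _)).
rewrite -sqrtr_sqr ler_sqrt; last by apply: mulr_ge0; apply: sumsq_ge0.
exact: cauchy.
Qed.

Lemma enormZ k a (x : 'cV[R]_k) : enorm (a *: x) = `|a| * enorm x.
Proof.
rewrite /enorm -sqrtr_sqr -sqrtrM ?sqr_ge0 // mulr_sumr.
congr Num.sqrt; apply: eq_bigr => i _; rewrite !mxE; ring.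
Qed.

Lemma enorm0 k : enorm (0 : 'cV[R]_k) = 0.
Proof.
rewrite /enorm big1 ?sqrtr0 // => i _; rewrite mxE; ring.
Qed.

Lemma enorm_sub k (x y : 'cV[R]_k) : enorm x - enorm y <= enorm (x - y).
Proof.
have := enorm_add (x - y) y; rewrite subrK; lra.
Qed.

Lemma enorm_sum k (I : finType) (F : I -> 'cV[R]_k) :
  enorm (\sum_i F i) <= \sum_i enorm (F i).
Proof.
apply: (big_ind2 (fun a b => enorm a <= b)).
- by rewrite enorm0.
- move=> a1 b1 a2 b2 h1 h2; apply: (le_trans (enorm_add _ _)); exact: lerD.
- by [].
Qed.

End Aux.

Lemma mul_col (R : rcfType) k n (V : 'M[R]_(k, n)) (c : 'cV[R]_n) :
  V *m c = \sum_j c j 0 *: col j V.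
Proof.
apply/matrixP => a b; rewrite !mxE summxE; apply: eq_bigr => j _.
by rewrite !mxE (ord1 b) mulrC.
Qed.

Lemma le_bigmax_norm (R : rcfType) n (F : 'I_n -> R) i :
  F i <= \big[Num.max/0]_(j < n) F j.
Proof.
rewrite /index_enum; move: (mem_index_enum i); rewrite /index_enum.
elim: (Finite.enum _) => [|a r IH] //=.
rewrite inE big_cons le_max => /orP [/eqP <-|/IH ->]; last by rewrite orbT.
by rewrite lexx.
Qed.

Lemma bigmax_ge0 (R : rcfType) n (F : 'I_n -> R) :
  (forall i, 0 <= F i) -> 0 <= \big[Num.max/0]_(j < n) F j.
Proof.
move=> h; apply: (big_ind (fun x => 0 <= x)) => //.
by move=> a b ha hb; rewrite le_max ha.
Qed.

Theorem lemma13 (R : rcfType) (k n : nat) (C : 'M[R]_n) (theta : R) :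
  C^T = C ->
  (forall i : 'I_n, C i i = 0) ->
  0 < theta -> theta * max_col_norm1 C < 1 ->
  exists delta : R, 0 < delta < 1 /\
    forall V : 'M[R]_(k, n), unit_columns V ->
      forall i : 'I_n,
        enorm (theta *: (V *m col i C)) <= 1 - delta /\
        delta <= enorm (col i V - theta *: (V *m col i C)).
Proof.
move=> _ _ th0 hm.
set m := max_col_norm1 C in hm *.
have m0 : 0 <= m.
  apply: bigmax_ge0 => i; apply: sumr_ge0 => j _; exact: normr_ge0.
have tm0 : 0 <= theta * m by apply: mulr_ge0 => //; exact: ltW.
exists ((1 - theta * m) / 2); split.
  apply/andP; split; lra.
move=> V hV i.
have key : enorm (theta *: (V *m col i C)) <= theta * m.
  rewrite enormZ ger0_norm; last exact: ltW.
  rewrite ler_pM2l //.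
  rewrite mul_col; apply: (le_trans (enorm_sum _)).
  apply: (@le_trans _ _ (norm1 (col i C))); last exact: le_bigmax_norm.
  rewrite /norm1; apply: ler_sum => j _.
  by rewrite enormZ hV mulr1.
split; first lra.
have := enorm_sub (col i V) (theta *: (V *m col i C)); rewrite hV; lra.
Qed.
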